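(* Let $(X,d)$ be a compact metric space and $f_{1,\infty}$ a commutative sequence of continuous self-maps of $X$. The following are equivalent: (1) $(X,f_{1,\infty})$ is weakly mixing; (2) $(\mathcal{K}(X),\overline{f}_{1,\infty})$ is weakly mixing; (3) $(\mathcal{K}(X),\overline{f}_{1,\infty})$ is topologically transitive.
   Context: Commutative: $f_i\circ f_j=f_j\circ f_i$ for all $i,j$. Write $f_1^n=f_n\circ\cdots\circ f_1$. $\mathcal{K}(X)$ is the hyperspace of non-empty compact subsets of $X$ with the Vietoris topology (equivalently the Hausdorff metric), and $\overline{f}_n(K)=f_n(K)$, so $\overline{f}_1^n(K)=f_1^n(K)$. A non-autonomous system $(Y,g_{1,\infty})$ is topologically transitive if for all non-empty open $U,V$ there is $n\in\mathbb{N}$ with $g_1^n(U)\cap V\ne\emptyset$, and weakly mixing if for all non-empty open $U_1,U_2,V_1,V_2$ there is $n\in\mathbb{N}$ with $g_1^n(U_i)\cap V_i\ne\emptyset$ for $i=1,2$. *)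

(* Defs.v *)
From Stdlib Require Import Reals List.
Open Scope R_scope.

Definition mopen (M : Metric_Space) (U : Base M -> Prop) : Prop :=
  forall x, U x -> exists eps, 0 < eps /\ forall y, dist M x y < eps -> U y.

Definition compact_set (M : Metric_Space) (K : Base M -> Prop) : Prop :=
  forall (I : Type) (U : I -> Base M -> Prop),
    (forall i, mopen M (U i)) ->
    (forall x, K x -> exists i, U i x) ->
    exists l : list I, forall x, K x -> exists i, In i l /\ U i x.

Definition compact_space (M : Metric_Space) : Prop :=
  compact_set M (fun _ => True).

Definition continuous_map (M : Metric_Space) (f : Base M -> Base M) : Prop :=
  forall x eps, 0 < eps -> exists delta, 0 < delta /\
    forall y, dist M x y < delta -> dist M (f x) (f y) < eps.

(* Elements of the hyperspace K(X): non-empty compact subsets. *)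
Definition in_hyper (M : Metric_Space) (K : Base M -> Prop) : Prop :=
  (exists x, K x) /\ compact_set M K.

(* Basic Vietoris open set <U_1,...,U_n> (the U_i given as a list). *)
Definition vietoris_basic (M : Metric_Space) (l : list (Base M -> Prop))
  (K : Base M -> Prop) : Prop :=
  in_hyper M K /\
  (forall x, K x -> exists U, In U l /\ U x) /\
  (forall U, In U l -> exists x, K x /\ U x).

Definition vietoris_open (M : Metric_Space)
  (UU : (Base M -> Prop) -> Prop) : Prop :=
  forall K, UU K -> exists l : list (Base M -> Prop),
    (forall U, In U l -> mopen M U) /\ vietoris_basic M l K /\
    (forall K', vietoris_basic M l K' -> UU K').

Definition image {A B : Type} (f : A -> B) (K : A -> Prop) : B -> Prop :=
  fun y => exists x, K x /\ f x = y.

(* Non-autonomous composition: g m stands for g_{m+1};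
   comp_seq g n = g_n o ... o g_1 (identity for n = 0). *)
Fixpoint comp_seq {Y : Type} (g : nat -> Y -> Y) (n : nat) : Y -> Y :=
  match n with
  | O => fun y => y
  | S m => fun y => g m (comp_seq g m y)
  end.

Definition top_transitive {Y : Type} (O : (Y -> Prop) -> Prop)
  (g : nat -> Y -> Y) : Prop :=
  forall U V, O U -> O V -> (exists y, U y) -> (exists y, V y) ->
    exists n, (1 <= n)%nat /\ exists y, U y /\ V (comp_seq g n y).

Definition weakly_mixing {Y : Type} (O : (Y -> Prop) -> Prop)
  (g : nat -> Y -> Y) : Prop :=
  forall U1 U2 V1 V2, O U1 -> O U2 -> O V1 -> O V2 ->
    (exists y, U1 y) -> (exists y, U2 y) -> (exists y, V1 y) -> (exists y, V2 y) ->
    exists n, (1 <= n)%nat /\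
      (exists y, U1 y /\ V1 (comp_seq g n y)) /\
      (exists y, U2 y /\ V2 (comp_seq g n y)).

Definition hyper_map {M : Metric_Space} (f : Base M -> Base M)
  : (Base M -> Prop) -> (Base M -> Prop) := image f.

(* Main.v *)
Require Import Defs.
From Stdlib Require Import Reals List Lra FunctionalExtensionality PropExtensionality.

Section S.
Variable M : Metric_Space.
Variable f : nat -> Base M -> Base M.
Local Notation F := (comp_seq f).

Lemma comm1 (Hc : forall i j x, f i (f j x) = f j (f i x)) :
  forall m i x, f i (F m x) = F m (f i x).
Proof. induction m; intros; simpl; [reflexivity|]. rewrite Hc, IHm. reflexivity. Qed.

Lemma commF (Hc : forall i j x, f i (f j x) = f j (f i x)) :
  forall n m x, F n (F m x) = F m (F n x).
Proof.
  induction n; intros; simpl; [reflexivity|].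
  rewrite IHn, comm1 by exact Hc. reflexivity.
Qed.

Lemma contF (Hf : forall i, continuous_map M (f i)) : forall n, continuous_map M (F n).
Proof.
  induction n; intros x eps He; simpl.
  - exists eps; split; auto.
  - destruct (Hf n (F n x) eps He) as [d1 [Hd1 H1]].
    destruct (IHn x d1 Hd1) as [d2 [Hd2 H2]].
    exists d2; split; auto.
Qed.

Lemma pre_open g U : continuous_map M g -> mopen M U -> mopen M (fun x => U (g x)).
Proof.
  intros Hg HU x Hx. destruct (HU _ Hx) as [e [He H]].
  destruct (Hg x e He) as [d [Hd H2]]. exists d; split; auto.
Qed.

Lemma inter_open U V : mopen M U -> mopen M V -> mopen M (fun x => U x /\ V x).
Proof.
  intros HU HV x [Ux Vx]. destruct (HU _ Ux) as [e1 [He1 H1]].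
  destruct (HV _ Vx) as [e2 [He2 H2]].
  exists (Rmin e1 e2); split; [apply Rmin_glb_lt; auto|].
  intros y Hy. pose proof (Rmin_l e1 e2). pose proof (Rmin_r e1 e2).
  split; [apply H1|apply H2]; lra.
Qed.

Lemma hyper_iter : forall n K,
  comp_seq (fun i => hyper_map (f i)) n K = image (F n) K.
Proof.
  induction n; intros K; simpl.
  - apply functional_extensionality; intro y; apply propositional_extensionality.
    unfold image; split; [intro H; exists y; auto | intros [x [Hx <-]]; auto].
  - rewrite IHn. unfold hyper_map. apply functional_extensionality; intro y;
    apply propositional_extensionality. unfold image; split.
    + intros [z [[x [Hx <-]] <-]]. exists x; auto.
    + intros [x [Hx <-]]. exists (F n x); split; auto. exists x; auto.
Qed.

Lemma finite_compact : forall l : list (Base M), compact_set M (fun x => In x l).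
Proof.
  intros l I U HU Hcov. induction l as [|a l IH].
  - exists nil; intros x [].
  - destruct (Hcov a (or_introl eq_refl)) as [i Hi].
    destruct IH as [l0 Hl0]. { intros x Hx; apply Hcov; right; auto. }
    exists (i :: l0). intros x [<-|Hx].
    + exists i; split; [left|]; auto.
    + destruct (Hl0 x Hx) as [j [Hj Uj]]. exists j; split; [right|]; auto.
Qed.

Lemma compact_ext K K' : compact_set M K -> (forall y, K' y <-> K y) -> compact_set M K'.
Proof.
  intros HK He I U HU Hcov. destruct (HK I U HU) as [l Hl].
  { intros x Kx; apply Hcov, He, Kx. }
  exists l; intros x Kx; apply Hl, He, Kx.
Qed.

Lemma basic_open l : (forall U, In U l -> mopen M U) -> vietoris_open M (vietoris_basic M l).
Proof. intros Hl K HK. exists l; auto. Qed.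

Lemma choose_list {A B : Type} (P : list A) (R : A -> B -> Prop) :
  (forall p, In p P -> exists x, R p x) ->
  exists xs : list B, (forall p, In p P -> exists x, In x xs /\ R p x) /\
    (forall x, In x xs -> exists p, In p P /\ R p x).
Proof.
  induction P as [|a P IH]; intros H.
  - exists nil; split; [intros p []|intros x []].
  - destruct (H a (or_introl eq_refl)) as [x0 Hx0].
    destruct IH as [xs [H1 H2]]. { intros p Hp; apply H; right; auto. }
    exists (x0 :: xs); split.
    + intros p [<-|Hp]. * exists x0; split; [left|]; auto.
      * destruct (H1 p Hp) as [x [Hx Rx]]; exists x; split; [right|]; auto.
    + intros x [<-|Hx]. * exists a; split; [left|]; auto.
      * destruct (H2 x Hx) as [p [Hp Rp]]; exists p; split; [right|]; auto.
Qed.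

Lemma build lU lV n U0 V0 : In U0 lU -> In V0 lV ->
  (forall U V, In U lU -> In V lV -> exists x, U x /\ V (F n x)) ->
  exists K, vietoris_basic M lU K /\ vietoris_basic M lV (image (F n) K).
Proof.
  intros HU0 HV0 H.
  destruct (choose_list (list_prod lU lV)
     (fun p x => fst p x /\ snd p (F n x))) as [xs [H1 H2]].
  { intros [U V] Hp. apply in_prod_iff in Hp. destruct Hp. apply H; auto. }
  assert (Hne : forall U V, In U lU -> In V lV -> exists x, In x xs /\ U x /\ V (F n x)).
  { intros U V HU HV. destruct (H1 (U, V)) as [x [Hx Rx]].
    apply in_prod_iff; auto. exists x; auto. }
  exists (fun x => In x xs). split; split; [|split| |split].
  - split. + destruct (Hne U0 V0 HU0 HV0) as [x [Hx _]]; exists x; auto.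
    + apply finite_compact.
  - intros x Hx. destruct (H2 x Hx) as [[U V] [Hp [Ux _]]].
    apply in_prod_iff in Hp. exists U; split; [apply Hp|auto].
  - intros U HU. destruct (Hne U V0 HU HV0) as [x [Hx [Ux _]]]; exists x; auto.
  - split. + destruct (Hne U0 V0 HU0 HV0) as [x [Hx _]]; exists (F n x); exists x; auto.
    + apply (compact_ext (fun y => In y (map (F n) xs))); [apply finite_compact|].
      intro y; rewrite in_map_iff; unfold image; split; intros [x [A B]]; exists x; auto.
  - intros y [x [Hx <-]]. destruct (H2 x Hx) as [[U V] [Hp [_ Vx]]].
    apply in_prod_iff in Hp. exists V; split; [apply Hp|auto].
  - intros V HV. destruct (Hne U0 V HU0 HV) as [x [Hx [_ Vx]]].
    exists (F n x); split; auto. exists x; auto.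
Qed.

Lemma multi (Hc : forall i j x, f i (f j x) = f j (f i x))
  (Hf : forall i, continuous_map M (f i)) (W : weakly_mixing (mopen M) f) :
  forall l : list ((Base M -> Prop) * (Base M -> Prop)),
  (forall p, In p l -> mopen M (fst p) /\ mopen M (snd p) /\
       (exists x, fst p x) /\ (exists x, snd p x)) ->
  forall A B, mopen M A -> mopen M B -> (exists x, A x) -> (exists x, B x) ->
  exists n, (1 <= n)%nat /\ (exists x, A x /\ B (F n x)) /\
    forall p, In p l -> exists x, fst p x /\ snd p (F n x).
Proof.
  induction l as [|[C D] l IH]; intros Hl A B HA HB nA nB.
  - destruct (W A A B B HA HA HB HB nA nA nB nB) as [n [Hn [H _]]].
    exists n; split; [|split]; auto. intros p [].
  - destruct (Hl (C, D) (or_introl eq_refl)) as [HC [HD [nC nD]]]; simpl in *.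
    destruct (W A B C D HA HB HC HD nA nB nC nD) as [n0 [_ [[a [Aa Ca]] [b [Bb Db]]]]].
    destruct (IH (fun p Hp => Hl p (or_intror Hp))
      (fun x => A x /\ C (F n0 x)) (fun x => B x /\ D (F n0 x))) as
      [n [Hn [[x [[Ax Cx] [Bx Dx]]] Hrest]]].
    + apply inter_open; auto. apply pre_open; auto. apply contF; auto.
    + apply inter_open; auto. apply pre_open; auto. apply contF; auto.
    + exists a; auto.
    + exists b; auto.
    + exists n; split; [auto|split].
      * exists x; auto.
      * intros p [<-|Hp]; [|auto]. simpl. exists (F n0 x); split; auto.
        rewrite commF by exact Hc. exact Dx.
Qed.

End S.

Theorem theorem3p2 (M : Metric_Space) (f : nat -> Base M -> Base M) :
  compact_space M ->
  (forall i, continuous_map M (f i)) ->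
  (forall i j x, f i (f j x) = f j (f i x)) ->
  (weakly_mixing (mopen M) f <->
     weakly_mixing (vietoris_open M) (fun i => hyper_map (f i))) /\
  (weakly_mixing (vietoris_open M) (fun i => hyper_map (f i)) <->
     top_transitive (vietoris_open M) (fun i => hyper_map (f i))).
Proof.
  intros _ Hf Hc.
  assert (T13 : top_transitive (vietoris_open M) (fun i => hyper_map (f i)) ->
                weakly_mixing (mopen M) f).
  { intros T.
    assert (LA : forall U V1 V2, mopen M U -> mopen M V1 -> mopen M V2 ->
      (exists x, U x) -> (exists x, V1 x) -> (exists x, V2 x) ->
      exists n, (1 <= n)%nat /\ (exists x, U x /\ V1 (comp_seq f n x)) /\
                (exists x, U x /\ V2 (comp_seq f n x))).
    { intros U V1 V2 HU HV1 HV2 [u Uu] [v1 V1v] [v2 V2v].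
      destruct (T (vietoris_basic M (U :: nil)) (vietoris_basic M (V1 :: V2 :: nil)))
        as [n [Hn [K [HK HK']]]].
      - apply basic_open. intros W [<-|[]]; auto.
      - apply basic_open. intros W [<-|[<-|[]]]; auto.
      - exists (fun x => In x (u :: nil)). split; [split; [exists u; left; auto|apply finite_compact]|split].
        + intros x [<-|[]]. exists U; split; [left|]; auto.
        + intros W [<-|[]]. exists u; split; [left|]; auto.
      - exists (fun x => In x (v1 :: v2 :: nil)).
        split; [split; [exists v1; left; auto|apply finite_compact]|split].
        + intros x [<-|[<-|[]]]; [exists V1|exists V2]; split; simpl; auto.
        + intros W [<-|[<-|[]]]; [exists v1|exists v2]; split; simpl; auto.
      - rewrite hyper_iter in HK'. destruct HK as [_ [HK1 _]].
        destruct HK' as [_ [_ HK2]].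
        destruct (HK2 V1 (or_introl eq_refl)) as [y1 [[x1 [Kx1 <-]] Vy1]].
        destruct (HK2 V2 (or_intror (or_introl eq_refl))) as [y2 [[x2 [Kx2 <-]] Vy2]].
        exists n; split; [auto|split].
        + exists x1; split; auto. destruct (HK1 x1 Kx1) as [W [[<-|[]] Wx]]; auto.
        + exists x2; split; auto. destruct (HK1 x2 Kx2) as [W [[<-|[]] Wx]]; auto. }
    intros U1 U2 V1 V2 HU1 HU2 HV1 HV2 nU1 nU2 nV1 nV2.
    destruct (LA U1 U2 V2 HU1 HU2 HV2 nU1 nU2 nV2) as [m [_ [[a [Ua Ua']] [b [Ub Vb]]]]].
    destruct (LA (fun x => U1 x /\ U2 (comp_seq f m x)) V1 (fun x => V2 (comp_seq f m x)))
      as [n [Hn [[x1 [[U1x1 _] V1x1]] [x2 [[U1x2 U2x2] V2x2]]]]].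
    + apply inter_open; auto. apply pre_open; auto. apply contF; auto.
    + auto.
    + apply pre_open; auto. apply contF; auto.
    + exists a; auto.
    + auto.
    + exists b; auto.
    + exists n; split; [auto|split].
      * exists x1; auto.
      * exists (comp_seq f m x2); split; auto. rewrite commF by exact Hc. exact V2x2. }
  assert (T23 : weakly_mixing (vietoris_open M) (fun i => hyper_map (f i)) ->
                top_transitive (vietoris_open M) (fun i => hyper_map (f i))).
  { intros W U V HU HV nU nV.
    destruct (W U U V V HU HU HV HV nU nU nV nV) as [n [Hn [H _]]]. exists n; auto. }
  assert (T12 : weakly_mixing (mopen M) f ->
                weakly_mixing (vietoris_open M) (fun i => hyper_map (f i))).
  { intros W UU1 UU2 VV1 VV2 HU1 HU2 HV1 HV2 [K1 K1U] [K2 K2U] [L1 L1V] [L2 L2V].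
    destruct (HU1 K1 K1U) as [lU1 [oU1 [bU1 cU1]]].
    destruct (HU2 K2 K2U) as [lU2 [oU2 [bU2 cU2]]].
    destruct (HV1 L1 L1V) as [lV1 [oV1 [bV1 cV1]]].
    destruct (HV2 L2 L2V) as [lV2 [oV2 [bV2 cV2]]].
    assert (NE : forall l K, vietoris_basic M l K -> exists U, In U l).
    { intros l K [[[x Kx] _] [Hc' _]]. destruct (Hc' x Kx) as [U [HU _]]; eauto. }
    assert (NE2 : forall l K U, vietoris_basic M l K -> In U l -> exists x, U x).
    { intros l K U [_ [_ H]] HU. destruct (H U HU) as [x [_ Ux]]; eauto. }
    assert (Hgood : forall p, In p (list_prod lU1 lV1 ++ list_prod lU2 lV2) ->
       mopen M (fst p) /\ mopen M (snd p) /\ (exists x, fst p x) /\ (exists x, snd p x)).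
    { intros [U V] Hp. apply in_app_or in Hp. simpl.
      destruct Hp as [Hp|Hp]; apply in_prod_iff in Hp; destruct Hp as [HU HV];
        repeat split; eauto. }
    destruct (NE _ _ bU1) as [U0 HU0]. destruct (NE _ _ bV1) as [V0 HV0].
    destruct (NE _ _ bU2) as [U0' HU0']. destruct (NE _ _ bV2) as [V0' HV0'].
    destruct (multi M f Hc Hf W _ Hgood U0 V0) as [n [Hn [_ Hall]]];
      [apply oU1; auto|apply oV1; auto|eauto|eauto|].
    destruct (build M f lU1 lV1 n U0 V0 HU0 HV0) as [K [B1 B1']].
    { intros U V HU HV. apply (Hall (U, V)). apply in_or_app; left; apply in_prod_iff; auto. }
    destruct (build M f lU2 lV2 n U0' V0' HU0' HV0') as [K' [B2 B2']].
    { intros U V HU HV. apply (Hall (U, V)). apply in_or_app; right; apply in_prod_iff; auto. }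
    exists n; split; [auto|split].
    - exists K; split; auto. rewrite hyper_iter; auto.
    - exists K'; split; auto. rewrite hyper_iter; auto. }
  tauto.
Qed.
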